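(* Let $A$ be a finite poset and $t>0$ an integer, let $k$ be the least natural number with $2^k>\max(|A|-t,\,t-1)$, and define $$\langle A\rangle_t:=\Big(\big((A/C_{2^k-t})+C_{2^k}\big)/C_t\Big)+A$$ (all constituents disjoint, with a fresh copy of $A$ as the last summand). Then $g(\langle A\rangle_t)=2^{k+1}$ if $g(A)<t$, and $g(\langle A\rangle_t)=0$ if $g(A)\ge t$.
   Context: For a finite poset $P$ and $x\in P$ let $P_x:=\{y\in P: x\not\le y\}$. The g-number is $g(P):=\operatorname{mex}\{g(P_x):x\in P\}$, where mex is the least natural number not in the set ($g(\emptyset)=0$). $P+Q$ (parallel union) is the disjoint union with points of $P$ incomparable to points of $Q$; $P/Q$ (series union) is the disjoint union with orders kept and every point of $P$ above every point of $Q$. $C_m$ is the chain with $m$ points ($C_0=\emptyset$). *)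

(* Defs.v *)
From mathcomp Require Import all_boot.
Set Implicit Arguments. Unset Strict Implicit. Unset Printing Implicit Defensive.

Record fposet := FPoset { pT : finType; ple : rel pT }.

Definition is_poset (P : fposet) : Prop :=
  [/\ reflexive (@ple P), antisymmetric (@ple P) & transitive (@ple P)].

Definition mex (s : seq nat) : nat :=
  find (fun n => n \notin s) (iota 0 (size s).+1).

(* g-number of the induced subposet on S, computed with fuel n.
   P_x = { y in S : ~ x <= y }. *)
Fixpoint gfuel (T : finType) (le : rel T) (n : nat) (S : {set T}) : nat :=
  match n with
  | 0 => 0
  | n'.+1 => mex [seq gfuel le n' [set y in S | ~~ le x y] | x <- enum S]
  end.

(* For a reflexive relation, fuel #|T| suffices (each step removes x). *)
Definition gnum (P : fposet) : nat := gfuel (@ple P) #|pT P| [set: pT P].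

Definition par_le (P Q : fposet) : rel (pT P + pT Q)%type :=
  fun u v => match u, v with
             | inl a, inl b => ple a b
             | inr a, inr b => ple a b
             | _, _ => false
             end.
Definition par (P Q : fposet) : fposet := FPoset (@par_le P Q).

(* series union P / Q : every point of P above every point of Q *)
Definition ser_le (P Q : fposet) : rel (pT P + pT Q)%type :=
  fun u v => match u, v with
             | inl a, inl b => ple a b
             | inr a, inr b => ple a b
             | inr _, inl _ => true
             | inl _, inr _ => false
             end.
Definition ser (P Q : fposet) : fposet := FPoset (@ser_le P Q).

Definition chain (m : nat) : fposet := @FPoset 'I_m (fun i j => i <= j).

Definition bracket (A : fposet) (t k : nat) : fposet :=
  par (ser (par (ser A (chain (2 ^ k - t))) (chain (2 ^ k))) (chain t)) A.

(* Main.v *)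
From Stdlib Require Import PeanoNat.
Require Import Defs.
From mathcomp Require Import all_boot zify.
Set Implicit Arguments. Unset Strict Implicit. Unset Printing Implicit Defensive.

Lemma expn_pow m n : expn m n = Nat.pow m n.
Proof. elim: n => [//|n IH]; rewrite expnS IH /=; lia. Qed.

Lemma lxor_div2 a b : Nat.div2 (Nat.lxor a b) = Nat.lxor (Nat.div2 a) (Nat.div2 b).
Proof.
apply: Nat.bits_inj => n.
by rewrite Nat.testbit_div2 !Nat.lxor_spec !Nat.testbit_div2.
Qed.

Lemma lxor_odd a b : Nat.odd (Nat.lxor a b) = xorb (Nat.odd a) (Nat.odd b).
Proof. by rewrite -!Nat.bit0_odd Nat.lxor_spec. Qed.

Lemma mk_odd x (c : bool) : Nat.odd (2 * x + Nat.b2n c) = c.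
Proof. by rewrite -Nat.bit0_odd Nat.testbit_0_r. Qed.

Lemma mk_div2 x (c : bool) : Nat.div2 (2 * x + Nat.b2n c) = x.
Proof.
apply: Nat.bits_inj => n.
by rewrite Nat.testbit_div2 -(Nat.testbit_succ_r x c n).
Qed.

Lemma dec2 a : a = 2 * Nat.div2 a + Nat.b2n (Nat.odd a).
Proof. exact: Nat.div2_odd. Qed.

Lemma lxor_rec a b : Nat.lxor a b =
  2 * Nat.lxor (Nat.div2 a) (Nat.div2 b) + Nat.b2n (xorb (Nat.odd a) (Nat.odd b)).
Proof. by rewrite {1}(dec2 (Nat.lxor a b)) lxor_div2 lxor_odd. Qed.

Lemma lxor_cancel a b c : Nat.lxor a b = Nat.lxor a c -> b = c.
Proof.
move=> h.
by rewrite -(Nat.lxor_0_l b) -(Nat.lxor_nilpotent a) Nat.lxor_assoc h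
   -Nat.lxor_assoc Nat.lxor_nilpotent Nat.lxor_0_l.
Qed.

Lemma div2_le a : Nat.div2 a <= a.
Proof. have := dec2 a; lia. Qed.

Lemma lxor_lt_ex n a b m : a + b < n -> m < Nat.lxor a b ->
  (exists2 a', a' < a & Nat.lxor a' b = m) \/ (exists2 b', b' < b & Nat.lxor a b' = m).
Proof.
elim: n a b m => [|n IH] a b m //= hn hm.
have ea := dec2 a; have eb := dec2 b; have em := dec2 m.
have hr := lxor_rec a b.
case: (ltnP (Nat.div2 m) (Nat.lxor (Nat.div2 a) (Nat.div2 b))) => h.
  have hab : Nat.div2 a + Nat.div2 b < n.
    have : 0 < a + b by move: hm; case: (a) => [|?] //; case: (b) => [|?].
    lia.
  case: (IH _ _ _ hab h) => [[a1 lt1 e1]|[b1 lt1 e1]].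
    left; exists (2 * a1 + Nat.b2n (xorb (Nat.odd m) (Nat.odd b))).
      case: (Nat.odd a) ea; case: (xorb _ _) => /=; lia.
    rewrite lxor_rec mk_div2 mk_odd e1 {3}em.
    by case: (Nat.odd m); case: (Nat.odd b).
  right; exists (2 * b1 + Nat.b2n (xorb (Nat.odd m) (Nat.odd a))).
    case: (Nat.odd b) eb; case: (xorb _ _) => /=; lia.
  rewrite lxor_rec mk_div2 mk_odd e1 {3}em.
  by case: (Nat.odd m); case: (Nat.odd a).
have hm' := hm; rewrite {1}em hr in hm'.
have e1 : Nat.div2 m = Nat.lxor (Nat.div2 a) (Nat.div2 b).
  move: hm'; case: (Nat.odd m); case: (xorb _ _) => /=; lia.
have om : Nat.odd m = false.
  move: hm'; rewrite e1; case: (Nat.odd m); case: (xorb _ _) => /=; lia.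
have oab : xorb (Nat.odd a) (Nat.odd b) = true.
  move: hm'; rewrite e1 om; case: (xorb _ _) => /=; lia.
case oa : (Nat.odd a) oab => /= oab.
  left; exists (2 * Nat.div2 a + Nat.b2n (Nat.odd b)).
    rewrite {2}ea oa; move: oab; case: (Nat.odd b) => //= _; lia.
  by rewrite lxor_rec mk_div2 mk_odd [in RHS]em om e1; case: (Nat.odd b).
right; exists (2 * Nat.div2 b + Nat.b2n (Nat.odd a)).
  rewrite {2}eb oab oa /=; lia.
by rewrite lxor_rec mk_div2 mk_odd oa [in RHS]em om e1.
Qed.

Lemma lxor_pow_small a k : a < 2 ^ k -> Nat.lxor a (2 ^ k) = a + 2 ^ k.
Proof.
rewrite expn_pow => ha.
apply/esym; rewrite addnE; apply: Nat.add_nocarry_lxor.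
apply: Nat.bits_inj => n.
rewrite Nat.land_spec Nat.bits_0 Nat.pow2_bits_eqb.
case: (Nat.eqb_spec k n) => [<-|]; last by rewrite andbF.
rewrite andbT -(Nat.mod_small a (Nat.pow 2 k)); last by apply/ltP.
by rewrite Nat.mod_pow2_bits_high.
Qed.

Lemma sumn_notin s y : sumn s < y -> y \notin s.
Proof.
elim: s => [//|x s IH] /= h; rewrite in_cons negb_or IH ?andbT; last by lia.
apply/eqP; lia.
Qed.

Lemma mex_spec s n : n \notin s -> (forall m, m < n -> m \in s) -> mex s = n.
Proof.
move=> ns hs.
have nle : n <= size s.
  have sub : {subset iota 0 n <= s} by move=> m; rewrite mem_iota add0n => /hs.
  by have := uniq_leq_size (iota_uniq 0 n) sub; rewrite size_iota.
rewrite /mex -(subnKC (leqW nle)) iotaD find_cat.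
have -> : has (fun n0 => n0 \notin s) (iota 0 n) = false.
  apply/hasPn => m; rewrite mem_iota add0n => /hs ->; done.
by rewrite size_iota subSn //= ns addn0.
Qed.

Lemma mexP s : mex s \notin s /\ (forall m, m < mex s -> m \in s).
Proof.
have ex : exists n, n \notin s by exists (sumn s).+1; apply: sumn_notin.
case: (ex_minnP ex) => n ns hmin.
have hs : forall m, m < n -> m \in s.
  by move=> m mn; apply/negPn/negP => /hmin; rewrite leqNgt mn.
by rewrite (mex_spec ns hs).
Qed.

Section G.
Variables (T : finType) (le : rel T).
Hypothesis le_refl : reflexive le.

Definition opt (S : {set T}) x := [set y in S | ~~ le x y].
Definition gs (S : {set T}) := gfuel le #|T| S.

Lemma card_opt (S : {set T}) (x : T) : x \in S -> #|opt S x| < #|S|.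
Proof.
move=> xS; apply: proper_card; apply/properP; split.
  by apply/subsetP=> y; rewrite inE => /andP[].
by exists x => //; rewrite inE le_refl andbF.
Qed.

Lemma mex_nil : mex [::] = 0.
Proof. by []. Qed.

Lemma gfuel_indep n n' (S : {set T}) : #|S| <= n -> #|S| <= n' -> gfuel le n S = gfuel le n' S.
Proof.
elim: n n' S => [|n IH] [|n'] S //= h h'.
- by rewrite (cards0_eq (_ : #|S| = 0)) ?enum_set0 //; lia.
- by rewrite (cards0_eq (_ : #|S| = 0)) ?enum_set0 //; lia.
- congr mex; apply/eq_in_map => x; rewrite mem_enum => xS.
  have := card_opt xS; rewrite /opt => c; apply: IH; lia.
Qed.

Lemma gsE (S : {set T}) : gs S = mex [seq gs (opt S x) | x <- enum S].
Proof.
have cS : #|S| <= #|T| := max_card (mem S).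
rewrite {1}/gs; case E: #|T| cS => [|p] cS /=.
  by rewrite (cards0_eq (_ : #|S| = 0)) ?enum_set0 //; lia.
congr mex; apply/eq_in_map => x; rewrite mem_enum => xS.
have c := card_opt xS; rewrite /gs; rewrite /opt in c *; apply: gfuel_indep; lia.
Qed.

Lemma gs_opt_neq (S : {set T}) x : x \in S -> gs (opt S x) != gs S.
Proof.
move=> xS; rewrite [gs S]gsE; case: (mexP [seq gs (opt S x) | x <- enum S]) => h _.
apply/eqP => e; move: h; rewrite -e; case/negP; apply/mapP; exists x => //.
by rewrite mem_enum.
Qed.

Lemma gs_opt_lt (S : {set T}) m : m < gs S -> exists2 x, x \in S & gs (opt S x) = m.
Proof.
rewrite gsE; case: (mexP [seq gs (opt S x) | x <- enum S]) => _ h /h.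
by case/mapP => x; rewrite mem_enum => xS ->; exists x.
Qed.

Lemma gs_spec (S : {set T}) n : (forall x, x \in S -> gs (opt S x) != n) ->
  (forall m, m < n -> exists2 x, x \in S & gs (opt S x) = m) -> gs S = n.
Proof.
move=> h1 h2; rewrite gsE; apply: mex_spec.
  by apply/mapP => -[x]; rewrite mem_enum => /h1 /eqP ne e; apply: ne.
move=> m /h2 [x xS e]; apply/mapP; exists x => //; by rewrite mem_enum.
Qed.

Lemma gs_le_card (S : {set T}) : gs S <= #|S|.
Proof.
move: {2}#|S|.+1 (ltnSn #|S|) => n; elim: n S => [//|n IH] S hS.
case E: (gs S) => [//|g].
have hg : g < gs S by rewrite E.
have [x xS hx] := gs_opt_lt hg.
have := IH (opt S x); have := card_opt xS; rewrite hx; lia.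
Qed.

Lemma gs_ind (Pr : {set T} -> Prop) :
  (forall S : {set T}, (forall x, x \in S -> Pr (opt S x)) -> Pr S) -> forall S, Pr S.
Proof.
move=> h S; move: {2}#|S|.+1 (ltnSn #|S|) => n; elim: n S => [//|n IH] S hS.
apply: h => x xS; apply: IH; have := card_opt xS; lia.
Qed.

End G.

Lemma lxor_cancel_r a b c : Nat.lxor b a = Nat.lxor c a -> b = c.
Proof. by rewrite (Nat.lxor_comm b) (Nat.lxor_comm c); apply: lxor_cancel. Qed.

Definition lp (T1 T2 : finType) (S : {set (T1 + T2)%type}) := [set a | inl a \in S].
Definition rp (T1 T2 : finType) (S : {set (T1 + T2)%type}) := [set b | inr b \in S].

Lemma lp_setT (T1 T2 : finType) : lp [set: (T1 + T2)%type] = setT.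
Proof. by apply/setP => a; rewrite !inE. Qed.
Lemma rp_setT (T1 T2 : finType) : rp [set: (T1 + T2)%type] = setT.
Proof. by apply/setP => a; rewrite !inE. Qed.

Lemma chain_refl m : reflexive (@ple (chain m)).
Proof. by move=> i; rewrite /= leqnn. Qed.

Lemma chain_gs m i : i <= m -> gs (@ple (chain m)) [set j : 'I_m | j < i] = i.
Proof.
move: {2}i.+1 (ltnSn i) => n; elim: n i => [//|n IH] i hn hi.
apply: (gs_spec (@chain_refl m)).
- move=> x; rewrite inE => xi.
  have -> : opt (@ple (chain m)) [set j : 'I_m | j < i] x = [set j : 'I_m | j < x].
    apply/setP => j; rewrite !inE /= -ltnNge.
    by case: (ltnP j x) => [jx|]; rewrite ?andbT ?andbF //; exact: ltn_trans jx xi.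
  rewrite IH ?neq_ltn ?xi //; lia.
- move=> k ki; have km : k < m by lia.
  exists (Ordinal km); first by rewrite inE.
  have -> : opt (@ple (chain m)) [set j : 'I_m | j < i] (Ordinal km) = [set j : 'I_m | j < k].
    apply/setP => j; rewrite !inE /= -ltnNge.
    by case: (ltnP j k) => [jk|]; rewrite ?andbT ?andbF //; exact: ltn_trans jk ki.
  rewrite IH //; lia.
Qed.

Lemma chain_full m : gs (@ple (chain m)) setT = m.
Proof.
transitivity (gs (@ple (chain m)) [set j : 'I_m | j < m]); last exact: chain_gs.
by apply: congr1; apply/setP => j; rewrite !inE ltn_ord.
Qed.

Section Par.
Variables P Q : fposet.
Hypotheses (rP : reflexive (@ple P)) (rQ : reflexive (@ple Q)).

Lemma par_refl : reflexive (@ple (par P Q)).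
Proof. by case=> a /=; [apply: rP | apply: rQ]. Qed.

Lemma par_gs (S : {set pT (par P Q)}) :
  gs (@ple (par P Q)) S = Nat.lxor (gs (@ple P) (lp S)) (gs (@ple Q) (rp S)).
Proof.
elim/(gs_ind par_refl): S => S IH.
apply: (gs_spec par_refl).
- case=> [a|b] xS; rewrite IH //.
  + have -> : lp (opt (@ple (par P Q)) S (inl a)) = opt (@ple P) (lp S) a.
      by apply/setP => c; rewrite !inE.
    have -> : rp (opt (@ple (par P Q)) S (inl a)) = rp S.
      by apply/setP => c; rewrite !inE /= andbT.
    apply/eqP => /lxor_cancel_r /eqP; apply/negP; apply: gs_opt_neq => //.
    by rewrite inE.
  + have -> : rp (opt (@ple (par P Q)) S (inr b)) = opt (@ple Q) (rp S) b.
      by apply/setP => c; rewrite !inE.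
    have -> : lp (opt (@ple (par P Q)) S (inr b)) = lp S.
      by apply/setP => c; rewrite !inE /= andbT.
    apply/eqP => /lxor_cancel /eqP; apply/negP; apply: gs_opt_neq => //.
    by rewrite inE.
- move=> n hn.
  have hs : gs (@ple P) (lp S) + gs (@ple Q) (rp S) < (gs (@ple P) (lp S) + gs (@ple Q) (rp S)).+1 by [].
  case: (lxor_lt_ex hs hn) => [[a' lt1 e1]|[b' lt1 e1]].
    have [a aS ea] := gs_opt_lt rP lt1.
    exists (inl a); first by rewrite inE in aS.
    rewrite IH; last by rewrite inE in aS.
    have -> : lp (opt (@ple (par P Q)) S (inl a)) = opt (@ple P) (lp S) a.
      by apply/setP => c; rewrite !inE.
    have -> : rp (opt (@ple (par P Q)) S (inl a)) = rp S.
      by apply/setP => c; rewrite !inE /= andbT.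
    by rewrite ea.
  have [b bS eb] := gs_opt_lt rQ lt1.
  exists (inr b); first by rewrite inE in bS.
  rewrite IH; last by rewrite inE in bS.
  have -> : rp (opt (@ple (par P Q)) S (inr b)) = opt (@ple Q) (rp S) b.
    by apply/setP => c; rewrite !inE.
  have -> : lp (opt (@ple (par P Q)) S (inr b)) = lp S.
    by apply/setP => c; rewrite !inE /= andbT.
  by rewrite eb.
Qed.
End Par.

Section Ser.
Variables P Q : fposet.
Hypotheses (rP : reflexive (@ple P)) (rQ : reflexive (@ple Q)).

Lemma ser_refl : reflexive (@ple (ser P Q)).
Proof. by case=> a /=; [apply: rP | apply: rQ]. Qed.

Lemma ser_left_empty (S : {set pT (ser P Q)}) : (forall a, inl a \notin S) ->
  gs (@ple (ser P Q)) S = gs (@ple Q) (rp S).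
Proof.
elim/(gs_ind ser_refl): S => S IH hS.
have ropt b : rp (opt (@ple (ser P Q)) S (inr b)) = opt (@ple Q) (rp S) b.
  by apply/setP => c; rewrite !inE.
have lopt b a : inl a \notin opt (@ple (ser P Q)) S (inr b).
  by rewrite inE (negbTE (hS a)).
apply: (gs_spec ser_refl).
- case=> [a|b] xS; first by move: (hS a); rewrite xS.
  rewrite IH //.
  rewrite ropt; apply: gs_opt_neq => //; by rewrite inE.
- move=> n /(gs_opt_lt rQ) [b bS eb].
  have bS' : inr b \in S by rewrite inE in bS.
  exists (inr b) => //.
  by rewrite IH // ropt.
Qed.
End Ser.

Section SerChain.
Variables (P : fposet) (m : nat).
Hypothesis rP : reflexive (@ple P).

Lemma ser_chain (S : {set pT (ser P (chain m))}) : (forall j, inr j \in S) ->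
  gs (@ple (ser P (chain m))) S = m + gs (@ple P) (lp S).
Proof.
have rL := ser_refl rP (@chain_refl m).
elim/(gs_ind rL): S => S IH hS.
have lopt a : lp (opt (@ple (ser P (chain m))) S (inl a)) = opt (@ple P) (lp S) a.
  by apply/setP => c; rewrite !inE.
have ropt a j : inr j \in opt (@ple (ser P (chain m))) S (inl a).
  by rewrite inE hS.
have ival (i : 'I_m) : gs (@ple (ser P (chain m))) (opt (@ple (ser P (chain m))) S (inr i)) = i.
  rewrite (ser_left_empty rP (@chain_refl m)); last by move=> a; rewrite inE /= andbF.
  rewrite -(chain_gs (ltnW (ltn_ord i))); apply: congr1.
  by apply/setP => j; rewrite !inE hS /= -ltnNge.
apply: (gs_spec rL).
- case=> [a|i] xS.
    rewrite IH // lopt; apply/eqP => e.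
    have : gs (@ple P) (opt (@ple P) (lp S) a) = gs (@ple P) (lp S) by lia.
    by apply/eqP; apply: gs_opt_neq => //; rewrite inE.
  rewrite ival; have := ltn_ord i; lia.
- move=> n hn; case: (ltnP n m) => nm.
    by exists (inr (Ordinal nm)) => //; rewrite ival.
  have lt1 : n - m < gs (@ple P) (lp S) by lia.
  have [a aS ea] := gs_opt_lt rP lt1.
  have aS' : inl a \in S by rewrite inE in aS.
  exists (inl a) => //.
  rewrite IH // lopt ea; lia.
Qed.
End SerChain.

Lemma lp_full (T1 T2 : finType) (S : {set (T1 + T2)%type}) : (forall x, x \in S) -> lp S = setT.
Proof. by move=> h; apply/setP => a; rewrite !inE h. Qed.
Lemma rp_full (T1 T2 : finType) (S : {set (T1 + T2)%type}) : (forall x, x \in S) -> rp S = setT.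
Proof. by move=> h; apply/setP => a; rewrite !inE h. Qed.

Lemma lp_serT (P Q : fposet) : lp [set: pT (ser P Q)] = [set: pT P].
Proof. by apply/setP => a; rewrite !inE. Qed.
Lemma lp_parT (P Q : fposet) : lp [set: pT (par P Q)] = [set: pT P].
Proof. by apply/setP => a; rewrite !inE. Qed.
Lemma rp_parT (P Q : fposet) : rp [set: pT (par P Q)] = [set: pT Q].
Proof. by apply/setP => a; rewrite !inE. Qed.

Theorem mainTheorem8 (A : fposet) (t k : nat) :
  is_poset A -> 0 < t ->
  maxn (#|pT A| - t) t.-1 < 2 ^ k ->
  (forall j, j < k -> 2 ^ j <= maxn (#|pT A| - t) t.-1) ->
  (gnum A < t -> gnum (bracket A t k) = 2 ^ k.+1) /\
  (t <= gnum A -> gnum (bracket A t k) = 0).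
Proof.
move=> [rA _ _] t0 hk _.
have ha : gnum A <= #|pT A|.
  by have := gs_le_card rA setT; rewrite cardsT.
have rC := @chain_refl.
have r1 := ser_refl rA (rC (2 ^ k - t)).
have r2 := par_refl r1 (rC (2 ^ k)).
have r3 := ser_refl r2 (rC t).
have full (T : finType) (x : T) : x \in [set: T] by rewrite inE.
have E1 : gs (@ple (ser A (chain (2 ^ k - t)))) setT = 2 ^ k - t + gnum A.
  by rewrite ser_chain ?lp_serT // => j; rewrite inE.
have E2 : gs (@ple (par (ser A (chain (2 ^ k - t))) (chain (2 ^ k)))) setT
          = Nat.lxor (2 ^ k - t + gnum A) (2 ^ k).
  by rewrite par_gs // lp_parT rp_parT E1 chain_full.
have E3 : gs (@ple (ser (par (ser A (chain (2 ^ k - t))) (chain (2 ^ k))) (chain t))) setT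
          = t + Nat.lxor (2 ^ k - t + gnum A) (2 ^ k).
  by rewrite ser_chain ?lp_serT ?E2 // => j; rewrite inE.
have E4 : gnum (bracket A t k) = Nat.lxor (t + Nat.lxor (2 ^ k - t + gnum A) (2 ^ k)) (gnum A).
  rewrite (_ : gnum (bracket A t k) = gs (@ple (bracket A t k)) setT) //.
  by rewrite /bracket par_gs // lp_parT rp_parT E3.
rewrite E4; split => h.
  have s1 : 2 ^ k - t + gnum A < 2 ^ k by lia.
  rewrite lxor_pow_small //.
  have s2 : gnum A < 2 ^ k.+1 by rewrite expnS; lia.
  have -> : t + (2 ^ k - t + gnum A + 2 ^ k) = gnum A + 2 ^ k.+1 by rewrite expnS; lia.
  rewrite -lxor_pow_small // Nat.lxor_comm -Nat.lxor_assoc Nat.lxor_nilpotent.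
  by rewrite Nat.lxor_0_l.
have s1 : gnum A - t < 2 ^ k by lia.
have -> : 2 ^ k - t + gnum A = gnum A - t + 2 ^ k by lia.
rewrite -lxor_pow_small // Nat.lxor_assoc Nat.lxor_nilpotent Nat.lxor_0_r.
have -> : t + (gnum A - t) = gnum A by lia.
by rewrite Nat.lxor_nilpotent.
Qed.
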